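(* In the calculus $\lambda^{RE}$ described in the context: if $e_1\Rrightarrow^* e_1'$, $e_2\Rrightarrow^* e_2'$ and $\delta\vdash e_1'\approx e_2':\tau$, then $\delta\vdash e_1\approx e_2:\tau$.
   Context: Syntax of $\lambda^{RE}$. Basic types $b ::= \mathsf{Bool}\mid\mathsf{Unit}$. Constants $c ::= \mathsf{true}\mid\mathsf{false}\mid\mathsf{unit}\mid (=_b)\mid (=_{(c,b)})$. Expressions $e ::= c\mid x\mid e\ e\mid \lambda x{:}\tau.\,e\mid \mathsf{BEq}_b\ e\ e\ e\mid \mathsf{XEq}_{x:\tau\to\tau}\ e\ e\ e$. Values $v ::= c\mid \lambda x{:}\tau.\,e\mid \mathsf{BEq}_b\ e\ e\ v\mid \mathsf{XEq}_{x:\tau\to\tau}\ e\ e\ v$. Types $\tau ::= \{x{:}b\mid e\}\mid x{:}\tau\to\tau\mid \mathsf{PEq}_{\tau}\{e\}\{e\}$. $e[x:=e']$ is capture-avoiding substitution. Reduction: evaluation contexts $E ::= \bullet\mid E\ e\mid v\ E\mid \mathsf{BEq}_b\ e\ e\ E\mid\mathsf{XEq}_{x:\tau\to\tau}\ e\ e\ E$; $E[e]\to E[e']$ if $e\to e'$; $(\lambda x{:}\tau.\,e)\ v\to e[x:=v]$; $(=_b)\ c_1\to(=_{(c_1,b)})$; $(=_{(c_1,b)})\ c_2\to\mathsf{true}$ if $c_1,c_2$ syntactically equal, else $\to\mathsf{false}$. $\to^*$ is the reflexive–transitive closure. Parallel reduction $e\Rrightarrow e'$, $\tau\Rrightarrow\tau'$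 (inductive): $x\Rrightarrow x$; $c\Rrightarrow c$; $\lambda x{:}\tau.e\Rrightarrow\lambda x{:}\tau'.e'$ if $\tau\Rrightarrow\tau'$, $e\Rrightarrow e'$; $e_1\ e_2\Rrightarrow e_1'\ e_2'$ if $e_i\Rrightarrow e_i'$; $(\lambda x{:}\tau.e)\ v\Rrightarrow e'[x:=v']$ if $e\Rrightarrow e'$, $v\Rrightarrow v'$; $(=_b)\ c_1\Rrightarrow(=_{(c_1,b)})$; $(=_{(c_1,b)})\ c_2\Rrightarrow\mathsf{true}$ if $c_1,c_2$ syntactically equal, $\Rrightarrow\mathsf{false}$ otherwise; $\mathsf{BEq}$ and $\mathsf{XEq}$ terms reduce componentwise (including type annotations); types reduce componentwise ($\{x{:}b\mid r\}\Rrightarrow\{x{:}b\mid r'\}$ if $r\Rrightarrow r'$, etc.). $\Rrightarrow^*$ is the reflexive–transitive closure. Equivalence logical relation. A pending substitution $\delta$ maps variables to pairs of closed values; $\delta_1,\delta_2$ are its component substitutions, and $\delta,(v_1,v_2)/x$ extends it. Value relation $\delta\vdash v_1\approx_{val}v_2:\tau$: for $\{x{:}b\mid r\}$: $v_1=v_2=c$ with $c$ a constant of simple type $b$, $\delta_1(r[x:=c])\to^*\mathsf{true}$ and $\delta_2(r[x:=c])\to^*\mathsf{true}$; for $x{:}\tau_x\to\tau$: for all $v_3,v_4$ with $\delta\vdash v_3\approx_{val}v_4:\tau_x$, $\delta,(v_3,v_4)/x\vdash v_1\ v_3\approx v_2\ v_4:\tau$; for $\mathsf{PEq}_\tau\{e_l\}\{e_r\}$: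 $\delta\vdash\delta_1(e_l)\approx\delta_2(e_r):\tau$. Expression relation: $\delta\vdash e_1\approx e_2:\tau$ iff $e_1\to^*v_1$, $e_2\to^*v_2$ and $\delta\vdash v_1\approx_{val}v_2:\tau$. *)

(* Defs.v *)
From Stdlib Require Import List Relations.
Import ListNotations.

Inductive basic : Type := BBool | BUnit.

Inductive const : Type :=
| CTrue | CFalse | CUnit
| CEq (b : basic)
| CEq1 (c : const) (b : basic).

(* Binders (de Bruijn index 0):
   - ELam t e       : lambda x:t. e        (x bound in e)
   - EXEq tx t l r p: XEq_{x:tx -> t} l r p (x bound in t)
   - TRef b r       : {x:b | r}            (x bound in r)
   - TArr tx t      : x:tx -> t            (x bound in t) *)
Inductive expr : Type :=
| EConst (c : const)
| EVar (x : nat)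
| EApp (e1 e2 : expr)
| ELam (t : ty) (e : expr)
| EBEq (b : basic) (el er ep : expr)
| EXEq (tx t : ty) (el er ep : expr)
with ty : Type :=
| TRef (b : basic) (r : expr)
| TArr (tx t : ty)
| TPEq (t : ty) (el er : expr).

Inductive is_value : expr -> Prop :=
| VConst c : is_value (EConst c)
| VLam t e : is_value (ELam t e)
| VBEq b el er v : is_value v -> is_value (EBEq b el er v)
| VXEq tx t el er v : is_value v -> is_value (EXEq tx t el er v).

Definition up_ren (xi : nat -> nat) : nat -> nat :=
  fun n => match n with 0 => 0 | S m => S (xi m) end.

Fixpoint ren_e (xi : nat -> nat) (e : expr) : expr :=
  match e with
  | EConst c => EConst c
  | EVar x => EVar (xi x)
  | EApp e1 e2 => EApp (ren_e xi e1) (ren_e xi e2)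
  | ELam t e => ELam (ren_t xi t) (ren_e (up_ren xi) e)
  | EBEq b el er ep => EBEq b (ren_e xi el) (ren_e xi er) (ren_e xi ep)
  | EXEq tx t el er ep =>
      EXEq (ren_t xi tx) (ren_t (up_ren xi) t) (ren_e xi el) (ren_e xi er) (ren_e xi ep)
  end
with ren_t (xi : nat -> nat) (t : ty) : ty :=
  match t with
  | TRef b r => TRef b (ren_e (up_ren xi) r)
  | TArr tx t => TArr (ren_t xi tx) (ren_t (up_ren xi) t)
  | TPEq t el er => TPEq (ren_t xi t) (ren_e xi el) (ren_e xi er)
  end.

Definition up_sub (s : nat -> expr) : nat -> expr :=
  fun n => match n with 0 => EVar 0 | S m => ren_e S (s m) end.

Fixpoint subst_e (s : nat -> expr) (e : expr) : expr :=
  match e with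
  | EConst c => EConst c
  | EVar x => s x
  | EApp e1 e2 => EApp (subst_e s e1) (subst_e s e2)
  | ELam t e => ELam (subst_t s t) (subst_e (up_sub s) e)
  | EBEq b el er ep => EBEq b (subst_e s el) (subst_e s er) (subst_e s ep)
  | EXEq tx t el er ep =>
      EXEq (subst_t s tx) (subst_t (up_sub s) t) (subst_e s el) (subst_e s er) (subst_e s ep)
  end
with subst_t (s : nat -> expr) (t : ty) : ty :=
  match t with
  | TRef b r => TRef b (subst_e (up_sub s) r)
  | TArr tx t => TArr (subst_t s tx) (subst_t (up_sub s) t)
  | TPEq t el er => TPEq (subst_t s t) (subst_e s el) (subst_e s er)
  end.

Definition sub0 (v : expr) : nat -> expr :=
  fun n => match n with 0 => v | S m => EVar m end.
Definition subst0_e (v e : expr) : expr := subst_e (sub0 v) e.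
Definition subst0_t (v : expr) (t : ty) : ty := subst_t (sub0 v) t.

Fixpoint wf_e (k : nat) (e : expr) : Prop :=
  match e with
  | EConst _ => True
  | EVar x => x < k
  | EApp e1 e2 => wf_e k e1 /\ wf_e k e2
  | ELam t e => wf_t k t /\ wf_e (S k) e
  | EBEq _ el er ep => wf_e k el /\ wf_e k er /\ wf_e k ep
  | EXEq tx t el er ep => wf_t k tx /\ wf_t (S k) t /\ wf_e k el /\ wf_e k er /\ wf_e k ep
  end
with wf_t (k : nat) (t : ty) : Prop :=
  match t with
  | TRef _ r => wf_e (S k) r
  | TArr tx t => wf_t k tx /\ wf_t (S k) t
  | TPEq t el er => wf_t k t /\ wf_e k el /\ wf_e k er
  end.
Definition closed (e : expr) : Prop := wf_e 0 e.

(* Small-step reduction (call-by-value, evaluation contexts inlined). *)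
Inductive step : expr -> expr -> Prop :=
| S_AppL e1 e1' e2 : step e1 e1' -> step (EApp e1 e2) (EApp e1' e2)
| S_AppR v e2 e2' : is_value v -> step e2 e2' -> step (EApp v e2) (EApp v e2')
| S_BEq b el er e e' : step e e' -> step (EBEq b el er e) (EBEq b el er e')
| S_XEq tx t el er e e' : step e e' -> step (EXEq tx t el er e) (EXEq tx t el er e')
| S_Beta t e v : is_value v -> step (EApp (ELam t e) v) (subst0_e v e)
| S_Eq b c1 : step (EApp (EConst (CEq b)) (EConst c1)) (EConst (CEq1 c1 b))
| S_EqT c1 b c2 : c1 = c2 ->
    step (EApp (EConst (CEq1 c1 b)) (EConst c2)) (EConst CTrue)
| S_EqF c1 b c2 : c1 <> c2 ->
    step (EApp (EConst (CEq1 c1 b)) (EConst c2)) (EConst CFalse).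

Definition steps : expr -> expr -> Prop := clos_refl_trans expr step.

Inductive par_e : expr -> expr -> Prop :=
| P_Var x : par_e (EVar x) (EVar x)
| P_Const c : par_e (EConst c) (EConst c)
| P_Lam t t' e e' : par_t t t' -> par_e e e' -> par_e (ELam t e) (ELam t' e')
| P_App e1 e1' e2 e2' : par_e e1 e1' -> par_e e2 e2' -> par_e (EApp e1 e2) (EApp e1' e2')
| P_Beta t e e' v v' : is_value v -> par_e e e' -> par_e v v' ->
    par_e (EApp (ELam t e) v) (subst0_e v' e')
| P_Eq b c1 : par_e (EApp (EConst (CEq b)) (EConst c1)) (EConst (CEq1 c1 b))
| P_EqT c1 b c2 : c1 = c2 ->
    par_e (EApp (EConst (CEq1 c1 b)) (EConst c2)) (EConst CTrue)
| P_EqF c1 b c2 : c1 <> c2 ->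
    par_e (EApp (EConst (CEq1 c1 b)) (EConst c2)) (EConst CFalse)
| P_BEq b el el' er er' ep ep' : par_e el el' -> par_e er er' -> par_e ep ep' ->
    par_e (EBEq b el er ep) (EBEq b el' er' ep')
| P_XEq tx tx' t t' el el' er er' ep ep' :
    par_t tx tx' -> par_t t t' -> par_e el el' -> par_e er er' -> par_e ep ep' ->
    par_e (EXEq tx t el er ep) (EXEq tx' t' el' er' ep')
with par_t : ty -> ty -> Prop :=
| P_TRef b r r' : par_e r r' -> par_t (TRef b r) (TRef b r')
| P_TArr tx tx' t t' : par_t tx tx' -> par_t t t' -> par_t (TArr tx t) (TArr tx' t')
| P_TPEq t t' el el' er er' : par_t t t' -> par_e el el' -> par_e er er' ->
    par_t (TPEq t el er) (TPEq t' el' er').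

Definition par_star : expr -> expr -> Prop := clos_refl_trans expr par_e.

Inductive const_basic : const -> basic -> Prop :=
| CB_True : const_basic CTrue BBool
| CB_False : const_basic CFalse BBool
| CB_Unit : const_basic CUnit BUnit.

(* Pending substitutions: delta is a list of pairs of closed values;
   the head of the list is the binding of de Bruijn index 0. *)
Definition pending_subst (d : list (expr * expr)) : Prop :=
  Forall (fun p => is_value (fst p) /\ closed (fst p) /\
                   is_value (snd p) /\ closed (snd p)) d.

Definition env_sub (vs : list expr) : nat -> expr :=
  fun n => match nth_error vs n with
           | Some v => v
           | None => EVar (n - length vs)
           end.
Definition apply_env (vs : list expr) (e : expr) : expr := subst_e (env_sub vs) e.
Definition delta1 (d : list (expr * expr)) : list expr := map fst d.
Definition delta2 (d : list (expr * expr)) : list expr := map snd d.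

Fixpoint val_rel (t : ty) (d : list (expr * expr)) (v1 v2 : expr) {struct t} : Prop :=
  match t with
  | TRef b r =>
      exists c, v1 = EConst c /\ v2 = EConst c /\ const_basic c b /\
        steps (apply_env (delta1 d) (subst0_e (EConst c) r)) (EConst CTrue) /\
        steps (apply_env (delta2 d) (subst0_e (EConst c) r)) (EConst CTrue)
  | TArr tx t' =>
      forall v3 v4, is_value v3 -> closed v3 -> is_value v4 -> closed v4 ->
        val_rel tx d v3 v4 ->
        exists w1 w2, steps (EApp v1 v3) w1 /\ is_value w1 /\
                      steps (EApp v2 v4) w2 /\ is_value w2 /\
                      val_rel t' ((v3, v4) :: d) w1 w2
  | TPEq t' el er =>
      exists w1 w2, steps (apply_env (delta1 d) el) w1 /\ is_value w1 /\
                    steps (apply_env (delta2 d) er) w2 /\ is_value w2 /\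
                    val_rel t' d w1 w2
  end.

Definition exp_rel (d : list (expr * expr)) (e1 e2 : expr) (t : ty) : Prop :=
  exists v1 v2, steps e1 v1 /\ is_value v1 /\ steps e2 v2 /\ is_value v2 /\
                val_rel t d v1 v2.

(* Main.v *)
Require Import Defs.
From Stdlib Require Import List Relations Lia Arith Wf_nat.
Import ListNotations.

Scheme expr_mut := Induction for expr Sort Prop with ty_mut := Induction for ty Sort Prop.
Combined Scheme expr_ty_mut from expr_mut, ty_mut.

Lemma up_ren_ext xi zeta : (forall n, xi n = zeta n) -> forall n, up_ren xi n = up_ren zeta n.
Proof. intros H [|n]; simpl; auto. Qed.
Lemma up_sub_ext s t : (forall n, s n = t n) -> forall n, up_sub s n = up_sub t n.
Proof. intros H [|n]; simpl; rewrite ?H; auto. Qed.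
#[local] Hint Resolve up_ren_ext up_sub_ext : core.

Lemma ren_ext : (forall e xi zeta, (forall n, xi n = zeta n) -> ren_e xi e = ren_e zeta e) /\
                (forall t xi zeta, (forall n, xi n = zeta n) -> ren_t xi t = ren_t zeta t).
Proof. apply expr_ty_mut; intros; simpl; f_equal; eauto. Qed.

Lemma subst_ext : (forall e s s', (forall n, s n = s' n) -> subst_e s e = subst_e s' e) /\
                (forall t s s', (forall n, s n = s' n) -> subst_t s t = subst_t s' t).
Proof. apply expr_ty_mut; intros; simpl; f_equal; eauto. Qed.

Lemma ren_as_subst : (forall e xi, ren_e xi e = subst_e (fun n => EVar (xi n)) e) /\
                (forall t xi, ren_t xi t = subst_t (fun n => EVar (xi n)) t).
Proof.
  apply expr_ty_mut; intros; simpl; f_equal; eauto;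
  try (rewrite H0 || rewrite H || rewrite H1); try (apply subst_ext; intros [|n]; reflexivity).
Qed.

Lemma subst_ren : (forall e s xi, subst_e s (ren_e xi e) = subst_e (fun n => s (xi n)) e) /\
                (forall t s xi, subst_t s (ren_t xi t) = subst_t (fun n => s (xi n)) t).
Proof.
  apply expr_ty_mut; intros; simpl; f_equal; eauto;
  repeat match goal with
  | IH : forall s xi, subst_e s (ren_e xi ?e) = _ |- context [subst_e _ (ren_e _ ?e)] => rewrite IH
  | IH : forall s xi, subst_t s (ren_t xi ?e) = _ |- context [subst_t _ (ren_t _ ?e)] => rewrite IH
  end; first [apply (proj1 subst_ext) | apply (proj2 subst_ext)]; intros [|n]; reflexivity.
Qed.

Lemma ren_ren e xi zeta : ren_e xi (ren_e zeta e) = ren_e (fun n => xi (zeta n)) e.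
Proof.
  rewrite (proj1 ren_as_subst _ xi), (proj1 subst_ren), (proj1 ren_as_subst). reflexivity.
Qed.

Lemma ren_subst : (forall e s xi, ren_e xi (subst_e s e) = subst_e (fun n => ren_e xi (s n)) e) /\
                (forall t s xi, ren_t xi (subst_t s t) = subst_t (fun n => ren_e xi (s n)) t).
Proof.
  apply expr_ty_mut; intros; simpl; f_equal; eauto;
  repeat match goal with
  | IH : forall s xi, ren_e xi (subst_e s ?e) = _ |- context [ren_e _ (subst_e _ ?e)] => rewrite IH
  | IH : forall s xi, ren_t xi (subst_t s ?e) = _ |- context [ren_t _ (subst_t _ ?e)] => rewrite IH
  end; first [apply (proj1 subst_ext) | apply (proj2 subst_ext)]; intros [|n]; simpl; try reflexivity;
  rewrite !ren_ren; apply (proj1 ren_ext); intros; reflexivity.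
Qed.

Lemma subst_subst : (forall e s s', subst_e s (subst_e s' e) = subst_e (fun n => subst_e s (s' n)) e) /\
                (forall t s s', subst_t s (subst_t s' t) = subst_t (fun n => subst_e s (s' n)) t).
Proof.
  apply expr_ty_mut; intros; simpl; f_equal; eauto;
  repeat match goal with
  | IH : forall s s', subst_e s (subst_e s' ?e) = _ |- context [subst_e _ (subst_e _ ?e)] => rewrite IH
  | IH : forall s s', subst_t s (subst_t s' ?e) = _ |- context [subst_t _ (subst_t _ ?e)] => rewrite IH
  end; first [apply (proj1 subst_ext) | apply (proj2 subst_ext)]; intros [|n]; simpl; try reflexivity;
  rewrite (proj1 subst_ren), (proj1 ren_subst); apply (proj1 subst_ext); intros; reflexivity.
Qed.

Lemma subst_id : (forall e, subst_e EVar e = e) /\ (forall t, subst_t EVar t = t).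
Proof.
  assert (Hu : forall n, up_sub EVar n = EVar n) by (intros [|n]; reflexivity).
  apply expr_ty_mut; intros; simpl; f_equal; eauto;
  first [rewrite (proj1 subst_ext _ _ EVar Hu) | rewrite (proj2 subst_ext _ _ EVar Hu)]; auto.
Qed.

Scheme par_mut := Induction for par_e Sort Prop with part_mut := Induction for par_t Sort Prop.
Combined Scheme par_ind_mut from par_mut, part_mut.

Lemma par_refl : (forall e, par_e e e) /\ (forall t, par_t t t).
Proof. apply expr_ty_mut; intros; constructor; auto. Qed.

Lemma value_subst v s : is_value v -> is_value (subst_e s v).
Proof. induction 1; simpl; constructor; auto. Qed.

Lemma value_ren v xi : is_value v -> is_value (ren_e xi v).
Proof. induction 1; simpl; constructor; auto. Qed.

Lemma ren_subst0 xi v e :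
  ren_e xi (subst0_e v e) = subst0_e (ren_e xi v) (ren_e (up_ren xi) e).
Proof.
  unfold subst0_e. rewrite (proj1 ren_subst), (proj1 subst_ren).
  apply (proj1 subst_ext); intros [|n]; reflexivity.
Qed.

Lemma subst_subst0 s v e :
  subst_e s (subst0_e v e) = subst0_e (subst_e s v) (subst_e (up_sub s) e).
Proof.
  unfold subst0_e. rewrite !(proj1 subst_subst).
  apply (proj1 subst_ext); intros [|n]; simpl; try reflexivity.
  rewrite (proj1 subst_ren). simpl. symmetry. apply (proj1 subst_id).
Qed.

Lemma par_ren : (forall e e', par_e e e' -> forall xi, par_e (ren_e xi e) (ren_e xi e')) /\
                (forall t t', par_t t t' -> forall xi, par_t (ren_t xi t) (ren_t xi t')).
Proof.
  apply par_ind_mut; intros; simpl; try (constructor; auto; fail).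
  rewrite ren_subst0. constructor; auto. apply value_ren; auto.
Qed.

Lemma par_up s s' : (forall n, par_e (s n) (s' n)) -> forall n, par_e (up_sub s n) (up_sub s' n).
Proof. intros H [|n]; simpl. constructor. apply (proj1 par_ren); auto. Qed.

Lemma par_subst : (forall e e', par_e e e' -> forall s s', (forall n, par_e (s n) (s' n)) -> par_e (subst_e s e) (subst_e s' e')) /\
                (forall t t', par_t t t' -> forall s s', (forall n, par_e (s n) (s' n)) -> par_t (subst_t s t) (subst_t s' t')).
Proof.
  apply par_ind_mut; intros; simpl; try (constructor; auto using par_up; fail).
  - auto.
  - rewrite subst_subst0. constructor; auto using par_up. apply value_subst; auto.
Qed.

Lemma par_value v w : is_value v -> par_e v w -> is_value w.
Proof.
  intros Hv; revert w; induction Hv; intros w Hp; inversion Hp; subst; constructor; auto.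
Qed.

Lemma par_inv_const u c : is_value u -> par_e u (EConst c) -> u = EConst c.
Proof. intros Hv Hp; inversion Hp; subst; auto; inversion Hv. Qed.

Lemma par_inv_lam u t b : is_value u -> par_e u (ELam t b) -> exists s b0, u = ELam s b0 /\ par_e b0 b.
Proof. intros Hv Hp; inversion Hp; subst; eauto; inversion Hv. Qed.

Inductive evalh : nat -> expr -> expr -> Prop :=
| EV_Val h v : is_value v -> evalh h v v
| EV_Beta h e1 e2 t b w v : evalh h e1 (ELam t b) -> evalh h e2 w ->
    evalh h (subst0_e w b) v -> evalh (S h) (EApp e1 e2) v
| EV_Eq h e1 e2 b c : evalh h e1 (EConst (CEq b)) -> evalh h e2 (EConst c) ->
    evalh (S h) (EApp e1 e2) (EConst (CEq1 c b))
| EV_EqT h e1 e2 b c1 c2 : evalh h e1 (EConst (CEq1 c1 b)) -> evalh h e2 (EConst c2) -> c1 = c2 ->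
    evalh (S h) (EApp e1 e2) (EConst CTrue)
| EV_EqF h e1 e2 b c1 c2 : evalh h e1 (EConst (CEq1 c1 b)) -> evalh h e2 (EConst c2) -> c1 <> c2 ->
    evalh (S h) (EApp e1 e2) (EConst CFalse)
| EV_BEq h b el er e w : evalh h e w -> evalh h (EBEq b el er e) (EBEq b el er w)
| EV_XEq h tx t el er e w : evalh h e w -> evalh h (EXEq tx t el er e) (EXEq tx t el er w).

Lemma eval_mono h e v : evalh h e v -> forall h', h <= h' -> evalh h' e v.
Proof.
  induction 1; intros h' Hle; try (destruct h' as [|h']; [lia|]);
  econstructor; eauto; apply IHevalh1 || apply IHevalh2 || apply IHevalh3 || apply IHevalh; lia.
Qed.

Lemma eval_value x h v : is_value x -> evalh h x v -> v = x.
Proof.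
  intros Hx; revert h v; induction Hx; intros h w He; inversion He; subst; auto;
  f_equal; eauto.
Qed.

Lemma not_value_app a b : ~ is_value (EApp a b).
Proof. intro H; inversion H. Qed.

Ltac app_case IH :=
  match goal with H : evalh ?h ?x _ |- _ =>
    match type of IH with context [evalh _ x _] =>
      destruct (IH _ _ H) as [h1 H1']; exists (S (max h1 h));
      first [ solve [eapply EV_Beta; solve [eapply eval_mono; [eassumption| lia] | eauto]]
            | solve [eapply EV_Eq; solve [eapply eval_mono; [eassumption| lia] | eauto]]
            | solve [eapply EV_EqT; solve [eapply eval_mono; [eassumption| lia] | eauto]]
            | solve [eapply EV_EqF; solve [eapply eval_mono; [eassumption| lia] | eauto]] ]
    end
  end.

Lemma step_eval e e1 : step e e1 -> forall h v, evalh h e1 v -> exists h', evalh h' e v.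
Proof.
  induction 1; intros h0 w Hev.
  - inversion Hev; subst; try (exfalso; eapply not_value_app; eauto; fail); app_case IHstep.
  - inversion Hev; subst; try (exfalso; eapply not_value_app; eauto; fail); app_case IHstep.
  - inversion Hev; subst.
    + match goal with H : is_value _ |- _ => inversion H; subst end.
      destruct (IHstep h0 e') as [h1 H1']. constructor; auto.
      exists h1. constructor; auto.
    + match goal with H : evalh _ e' _ |- _ => destruct (IHstep _ _ H) as [h1 H1'] end.
      exists h1. constructor; auto.
  - inversion Hev; subst.
    + match goal with H : is_value _ |- _ => inversion H; subst end.
      destruct (IHstep h0 e') as [h1 H1']. constructor; auto.
      exists h1. constructor; auto.
    + match goal with H : evalh _ e' _ |- _ => destruct (IHstep _ _ H) as [h1 H1'] end.
      exists h1. constructor; auto.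
  - exists (S h0). econstructor; eauto; constructor; auto. constructor.
  - apply eval_value in Hev; [|constructor]. subst. exists 1. econstructor; constructor; constructor.
  - apply eval_value in Hev; [|constructor]. subst. exists 1. eapply EV_EqT; auto; constructor; constructor.
  - apply eval_value in Hev; [|constructor]. subst. exists 1. eapply EV_EqF; eauto; constructor; constructor.
Qed.

Lemma steps_eval e v : steps e v -> is_value v -> exists h, evalh h e v.
Proof.
  intros H Hv. apply clos_rt_rt1n in H. induction H.
  - exists 0. constructor; auto.
  - destruct (IHclos_refl_trans_1n Hv) as [h Hh]. eapply step_eval; eauto.
Qed.

Lemma steps_trans a b c : steps a b -> steps b c -> steps a c.
Proof. intros; eapply rt_trans; eauto. Qed.
Lemma steps_step a b : step a b -> steps a b.
Proof. intros; apply rt_step; auto. Qed.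
Lemma steps_appL a a' b : steps a a' -> steps (EApp a b) (EApp a' b).
Proof. induction 1; [apply rt_step; constructor; auto | apply rt_refl | eapply rt_trans; eauto]. Qed.
Lemma steps_appR v a a' : is_value v -> steps a a' -> steps (EApp v a) (EApp v a').
Proof. induction 2; [apply rt_step; constructor; auto | apply rt_refl | eapply rt_trans; eauto]. Qed.
Lemma steps_beq b el er a a' : steps a a' -> steps (EBEq b el er a) (EBEq b el er a').
Proof. induction 1; [apply rt_step; constructor; auto | apply rt_refl | eapply rt_trans; eauto]. Qed.
Lemma steps_xeq tx t el er a a' : steps a a' -> steps (EXEq tx t el er a) (EXEq tx t el er a').
Proof. induction 1; [apply rt_step; constructor; auto | apply rt_refl | eapply rt_trans; eauto]. Qed.

Definition good (s s' : nat -> expr) : Prop :=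
  forall x, par_e (s x) (s' x) /\ (is_value (s x) \/ exists y, s x = EVar y).

Definition scons (w : expr) (s : nat -> expr) : nat -> expr :=
  fun n => match n with 0 => w | S m => s m end.

Lemma subst_up_sub0 s w b : subst0_e w (subst_e (up_sub s) b) = subst_e (scons w s) b.
Proof.
  unfold subst0_e. rewrite (proj1 subst_subst). apply (proj1 subst_ext); intros [|n]; simpl; auto.
  rewrite (proj1 subst_ren). apply (proj1 subst_id).
Qed.

Lemma subst_sub0_comp s w b : subst_e s (subst0_e w b) = subst_e (scons (subst_e s w) s) b.
Proof.
  unfold subst0_e. rewrite (proj1 subst_subst). apply (proj1 subst_ext); intros [|n]; simpl; auto.
Qed.

Lemma good_pw s s' : good s s' -> forall n, par_e (s n) (s' n).
Proof. intros H n; apply H. Qed.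

Lemma main h : forall e e', par_e e e' -> forall s s' v', good s s' -> evalh h (subst_e s' e') v' ->
  exists v, steps (subst_e s e) v /\ is_value v /\ par_e v v'.
Proof.
  induction h as [h IHh] using (well_founded_induction lt_wf).
  intros e e' D. induction D; intros s s' r Hg Hev; simpl in *.
  -
    destruct (Hg x) as [Hp [Hv | [y Hy]]].
    + pose proof (par_value _ _ Hv Hp). apply eval_value in Hev; auto. subst.
      exists (s x). split; [apply rt_refl|]. auto.
    + rewrite Hy in Hp. assert (E : s' x = EVar y) by (inversion Hp; auto).
      rewrite E in Hev. inversion Hev; subst.
      match goal with H : is_value _ |- _ => inversion H end.
  - apply eval_value in Hev; [|constructor]. subst. exists (EConst c); repeat split; [apply rt_refl|constructor|constructor].
  - apply eval_value in Hev; [|constructor]. subst. eexists; repeat split; [apply rt_refl|constructor|].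
    constructor. apply (proj2 par_subst); auto. apply good_pw; auto.
    apply (proj1 par_subst); auto. apply par_up, good_pw; auto.
  -
    inversion Hev; subst; try (exfalso; eapply not_value_app; eauto; fail);
    (match goal with Ha : evalh ?k (subst_e s' e1') _ |- _ =>
       destruct (IHh k ltac:(lia) _ _ D1 s s' _ Hg Ha) as [u1 [S1 [V1 P1]]] end);
    (match goal with Ha : evalh ?k (subst_e s' e2') _ |- _ =>
       destruct (IHh k ltac:(lia) _ _ D2 s s' _ Hg Ha) as [u2 [S2 [V2 P2]]] end).
    + destruct (par_inv_lam _ _ _ V1 P1) as [t0 [b0 [-> Pb]]].
      assert (Hg2 : good (sub0 u2) (sub0 w)).
      { intros [|n]; simpl; split; auto. constructor. right; eauto. }
      match goal with Ha : evalh ?k (subst0_e w _) _ |- _ =>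
      destruct (IHh k ltac:(lia) _ _ Pb _ _ _ Hg2 Ha) as [v [S3 [V3 P3]]] end.
      exists v; repeat split; auto.
      eapply steps_trans; [apply steps_appL; eauto|].
      eapply steps_trans; [apply steps_appR; eauto; constructor|].
      eapply steps_trans; [apply steps_step; apply S_Beta; eauto|]. exact S3.
    + apply par_inv_const in P1; auto. apply par_inv_const in P2; auto. subst.
      eexists; repeat split; [|constructor|constructor].
      eapply steps_trans; [apply steps_appL; eauto|].
      eapply steps_trans; [apply steps_appR; eauto; constructor|].
      apply steps_step; constructor.
    + apply par_inv_const in P1; auto. apply par_inv_const in P2; auto. subst.
      eexists; repeat split; [|constructor|constructor].
      eapply steps_trans; [apply steps_appL; eauto|].
      eapply steps_trans; [apply steps_appR; eauto; constructor|].
      apply steps_step; constructor; auto.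
    + apply par_inv_const in P1; auto. apply par_inv_const in P2; auto. subst.
      eexists; repeat split; [|constructor|constructor].
      eapply steps_trans; [apply steps_appL; eauto|].
      eapply steps_trans; [apply steps_appR; eauto; constructor|].
      apply steps_step; apply S_EqF; auto.
  -
    rewrite subst_sub0_comp in Hev.
    assert (Hg2 : good (scons (subst_e s v) s) (scons (subst_e s' v') s')).
    { intros [|n]; simpl; [|apply Hg]. split.
      - apply (proj1 par_subst); auto. apply good_pw; auto.
      - left; apply value_subst; auto. }
    destruct (IHD1 _ _ _ Hg2 Hev) as [w [S1 [V1 P1]]].
    exists w; repeat split; auto.
    eapply steps_trans; [apply steps_step; apply S_Beta; apply value_subst; auto|].
    rewrite subst_up_sub0. exact S1.
  - apply eval_value in Hev; [|constructor]. subst. eexists; repeat split; [|constructor|constructor].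
    apply steps_step; constructor.
  - apply eval_value in Hev; [|constructor]. subst. eexists; repeat split; [|constructor|constructor].
    apply steps_step; constructor; auto.
  - apply eval_value in Hev; [|constructor]. subst. eexists; repeat split; [|constructor|constructor].
    apply steps_step; apply S_EqF; auto.
  -
    assert (exists u, steps (subst_e s ep) u /\ is_value u /\ par_e u (match r with EBEq _ _ _ w => w | _ => r end)
             /\ r = EBEq b (subst_e s' el') (subst_e s' er') (match r with EBEq _ _ _ w => w | _ => r end))
      as [u [S1 [V1 [P1 Er]]]].
    { inversion Hev; subst.
      + match goal with H : is_value _ |- _ => inversion H; subst end.
        edestruct IHD3 as [u [S1 [V1 P1]]]; [exact Hg| apply EV_Val; eassumption|].
        exists u; repeat split; auto.
      + match goal with Ha : evalh _ (subst_e s' ep') _ |- _ =>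
          destruct (IHD3 s s' _ Hg Ha) as [u [S1 [V1 P1]]] end.
        exists u; repeat split; auto. }
    rewrite Er.
    exists (EBEq b (subst_e s el) (subst_e s er) u); repeat split.
    * apply steps_beq; auto.
    * constructor; auto.
    * constructor; auto; apply (proj1 par_subst); auto; apply good_pw; auto.
  -
    assert (exists u, steps (subst_e s ep) u /\ is_value u /\ par_e u (match r with EXEq _ _ _ _ w => w | _ => r end)
             /\ r = EXEq (subst_t s' tx') (subst_t (up_sub s') t') (subst_e s' el') (subst_e s' er') (match r with EXEq _ _ _ _ w => w | _ => r end))
      as [u [S1 [V1 [P1 Er]]]].
    { inversion Hev; subst.
      + match goal with H : is_value _ |- _ => inversion H; subst end.
        edestruct IHD3 as [u [S1 [V1 P1]]]; [exact Hg| apply EV_Val; eassumption|].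
        exists u; repeat split; auto.
      + match goal with Ha : evalh _ (subst_e s' ep') _ |- _ =>
          destruct (IHD3 s s' _ Hg Ha) as [u [S1 [V1 P1]]] end.
        exists u; repeat split; auto. }
    rewrite Er.
    exists (EXEq (subst_t s tx) (subst_t (up_sub s) t) (subst_e s el) (subst_e s er) u); repeat split.
    * apply steps_xeq; auto.
    * constructor; auto.
    * constructor; auto; try apply (proj1 par_subst); try apply (proj2 par_subst); auto;
        try apply par_up; apply good_pw; auto.
Qed.

Lemma single e e' v' : par_e e e' -> steps e' v' -> is_value v' ->
  exists v, steps e v /\ is_value v /\ par_e v v'.
Proof.
  intros D S V. destruct (steps_eval _ _ S V) as [h Hh].
  assert (Hg : good EVar EVar) by (intros x; split; [constructor | right; eauto]).
  rewrite <- (proj1 subst_id e') in Hh.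
  destruct (main h _ _ D _ _ _ Hg Hh) as [v [S1 [V1 P1]]].
  rewrite (proj1 subst_id) in S1. eauto.
Qed.

Lemma chain e e' v' : par_star e e' -> steps e' v' -> is_value v' ->
  exists v, steps e v /\ is_value v /\ par_star v v'.
Proof.
  intros H. apply clos_rt_rt1n in H. revert v'. induction H; intros v' S V.
  - exists v'; repeat split; auto. apply rt_refl.
  - destruct (IHclos_refl_trans_1n _ S V) as [v1 [S1 [V1 P1]]].
    destruct (single _ _ _ H S1 V1) as [v [S2 [V2 P2]]].
    exists v; repeat split; auto. eapply rt_trans; [apply rt_step; eauto | auto].
Qed.

Lemma par_star_const v c : is_value v -> par_star v (EConst c) -> v = EConst c.
Proof.
  intros Hv H. apply clos_rt_rt1n in H. remember (EConst c) as z. induction H; auto.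
  pose proof (par_value _ _ Hv H). rewrite IHclos_refl_trans_1n in H; auto.
  subst. apply par_inv_const; auto.
Qed.

Lemma par_star_app a a' b : par_star a a' -> par_star (EApp a b) (EApp a' b).
Proof.
  induction 1; [apply rt_step; constructor; auto; apply par_refl | apply rt_refl | eapply rt_trans; eauto].
Qed.

Lemma val_closure t : forall d v1 v2 v1' v2', is_value v1 -> is_value v2 ->
  par_star v1 v1' -> par_star v2 v2' -> val_rel t d v1' v2' -> val_rel t d v1 v2.
Proof.
  induction t; intros d v1 v2 v1' v2' V1 V2 P1 P2 H; simpl in *.
  - destruct H as [c [E1 [E2 R]]]. subst.
    apply par_star_const in P1; auto. apply par_star_const in P2; auto. subst. eauto.
  - intros v3 v4 V3 C3 V4 C4 R34.
    destruct (H v3 v4 V3 C3 V4 C4 R34) as [w1 [w2 [S1 [W1 [S2 [W2 R]]]]]].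
    destruct (chain _ _ _ (par_star_app _ _ v3 P1) S1 W1) as [u1 [T1 [U1 Q1]]].
    destruct (chain _ _ _ (par_star_app _ _ v4 P2) S2 W2) as [u2 [T2 [U2 Q2]]].
    exists u1, u2; repeat split; auto. eapply IHt2; eauto.
  - exact H.
Qed.

Theorem lemmaB20 :
  forall (d : list (expr * expr)) (e1 e1' e2 e2' : expr) (t : ty),
    pending_subst d ->
    par_star e1 e1' -> par_star e2 e2' ->
    exp_rel d e1' e2' t ->
    exp_rel d e1 e2 t.
Proof.
  intros d e1 e1' e2 e2' t _ P1 P2 [v1 [v2 [S1 [V1 [S2 [V2 R]]]]]].
  destruct (chain _ _ _ P1 S1 V1) as [u1 [T1 [U1 Q1]]].
  destruct (chain _ _ _ P2 S2 V2) as [u2 [T2 [U2 Q2]]].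
  exists u1, u2; repeat split; auto. eapply val_closure; eauto.
Qed.
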